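(* There is an absolute constant $C$ such that the following holds. Let $f\ge 1$ and let $G$ be a simple graph on $n>10f$ vertices and $m$ edges, with some ordering of its edges, that admits an $f$-MFD blocking set. Then $m\le C\, fn\log(n/f)$. In particular, for every simple $n$-vertex graph $G$ with $n>10f$ and every edge ordering, the output $H$ of the greedy algorithm $\mathsf{FTGreedyMFDCertificate}(G,f)$ has at most $C\, fn\log(n/f)$ edges.
   Context: For a graph $G=(V,E)$ and $F\subseteq V\cup E$, $G-F$ is obtained by deleting the vertices of $F\cap V$ (with incident edges) and the edges of $F\cap E$. $F$ damages an edge $e$ if $e$ is not an edge of $G-F$. For $v\in V$ let $\deg_G(v,F)=|\{u\in N_G(v): u\in F\text{ or }\{u,v\}\in F\}|$ and $\deg_G(F)=\max_{v\in V\setminus F}\deg_G(v,F)$. Given ordered edges $e_1,\dots,e_m$ with $e_i=\{u_i,v_i\}$, let $G_{<i}=(V,\{e_1,\dots,e_{i-1}\})$. An $f$-MFD blocking set for $G$ is a collection $\{(e_i,F_i)\}_{i=1}^m$ with $F_i\subseteq V\cup E$ such that (1) $F_i$ does not damage $e_i$, (2) $u_i,v_i$ are disconnected in $G_{<i}-F_i$, and (3) $\deg_G(F_i)\le f$. The algorithm $\mathsf{FTGreedyMFDCertificate}(G,f)$: start with $H=(V,\emptyset)$; for $i=1,\dots,m$, if there exists $F\subseteq V\cup E$ with $\deg_G(F)\le f$ that does not damage $e_i$ such that $u_i$ and $v_i$ are disconnected in $H-F$, add $e_i$ to $H$; return $H$. Logarithms are base 2. *)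

(* Defs.v *)
From Stdlib Require Import Reals.
From mathcomp Require Import all_boot.
Set Implicit Arguments. Unset Strict Implicit. Unset Printing Implicit Defensive.

(* A simple graph with an edge ordering on vertex set T (n = #|T|):
   the ordered list of edges es = [e_1; ...; e_m], each edge a 2-subset of T,
   without repetition. *)
Definition edges_ok (T : finType) (es : seq {set T}) : bool :=
  uniq es && all (fun e : {set T} => #|e| == 2) es.

(* F ⊆ V ∪ E, represented as (vertex part, edge part). *)
Definition Fset (T : finType) := ({set T} * {set {set T}})%type.

Definition validF (T : finType) (es : seq {set T}) (F : Fset T) : bool :=
  F.2 \subset [set e in es].

(* F damages e iff e is not an edge of G - F. *)
Definition damages (T : finType) (F : Fset T) (e : {set T}) : bool :=
  [exists x in e, x \in F.1] || (e \in F.2).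

Definition degv (T : finType) (es : seq {set T}) (F : Fset T) (v : T) : nat :=
  #|[set u | [&& u != v, [set u; v] \in es &
                 (u \in F.1) || ([set u; v] \in F.2)]]|.

Definition degF_le (T : finType) (es : seq {set T}) (F : Fset T) (f : nat) : bool :=
  [forall v, (v \notin F.1) ==> (degv es F v <= f)].

Definition adjF (T : finType) (H : seq {set T}) (F : Fset T) : rel T :=
  fun x y => [&& x \notin F.1, y \notin F.1, x != y,
                 [set x; y] \in H & [set x; y] \notin F.2].

Definition disconn (T : finType) (H : seq {set T}) (F : Fset T) (e : {set T}) : bool :=
  [forall u in e, forall v in e, (u != v) ==> ~~ connect (adjF H F) u v].

(* f-MFD blocking set for the ordered graph es: the i-th entry (0-indexed)
   is (e_i, Fs i), and G_{<i} has edge list take i es. *)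
Definition has_MFD_blocking_set (T : finType) (es : seq {set T}) (f : nat) : Prop :=
  exists Fs : nat -> Fset T,
    forall i, (i < size es)%N ->
      let e := nth set0 es i in
      [/\ validF es (Fs i), ~~ damages (Fs i) e,
          disconn (take i es) (Fs i) e & degF_le es (Fs i) f].

Definition greedy_step (T : finType) (es : seq {set T}) (f : nat)
    (H : seq {set T}) (e : {set T}) : seq {set T} :=
  if [exists F : Fset T,
        [&& validF es F, degF_le es F f, ~~ damages F e & disconn H F e]]
  then rcons H e else H.

Definition FTGreedyMFDCertificate (T : finType) (es : seq {set T}) (f : nat)
  : seq {set T} := foldl (greedy_step es f) [::] es.

Definition log2 (x : R) : R := Rdiv (ln x) (ln 2).

(* Main.v *)
Require Import Defs.
From Stdlib Require Import Reals.
From mathcomp Require Import all_boot.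
From mathcomp Require Import zify.
From Stdlib Require Import Lra.
Set Implicit Arguments. Unset Strict Implicit. Unset Printing Implicit Defensive.

Section Core.
Variable T : finType.
Variable f : nat.

Definition nbo (s : seq {set T}) (A : {set T}) (a : T) : {set T} :=
  [set x | (x \notin A) && ([set a; x] \in s)].

Definition cond (s : seq {set T}) (e : {set T}) : Prop :=
  exists (A B : {set T}) (u v : T),
    [/\ e = [set u; v], u \in A, v \in B, (forall x, x \in A -> x \notin B) &
        ((forall a, a \in A -> #|nbo s A a| <= f) /\
        (forall b, b \in B -> #|nbo s B b| <= f))].

Definition good (s : seq {set T}) : Prop :=
  forall i, i < size s -> cond (take i s) (nth set0 s i).

Lemma cond_sub s s' e : {subset s' <= s} -> cond s e -> cond s' e.
Proof.
move=> ss [A [B [u [v [E uA vB dAB [hA hB]]]]]].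
have hn : forall X a, #|nbo s' X a| <= #|nbo s X a|.
  move=> X a; apply: subset_leq_card; apply/subsetP => x.
  by rewrite !inE => /andP [-> /ss ->].
exists A, B, u, v; split => //; split => [a aA|b bB].
  exact: leq_trans (hn _ _) (hA _ aA).
exact: leq_trans (hn _ _) (hB _ bB).
Qed.

Lemma good_rcons s e : good (rcons s e) <-> good s /\ cond s e.
Proof.
split.
  move=> g; split.
    move=> i lti; have := g i; rewrite size_rcons ltnS ltnW // => /(_ isT).
    by rewrite nth_rcons lti -cats1 takel_cat // ltnW.
  have := g (size s); rewrite size_rcons ltnSn => /(_ isT).
  by rewrite nth_rcons ltnn eqxx -cats1 take_size_cat.
move=> [g c] i; rewrite size_rcons ltnS leq_eqVlt => /orP [/eqP ->|lti].
  by rewrite nth_rcons ltnn eqxx -cats1 take_size_cat.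
by rewrite nth_rcons lti -cats1 takel_cat ?(ltnW lti) //; apply: g.
Qed.

Lemma good_nil : good [::].
Proof. by []. Qed.

Lemma good_filter (P : pred {set T}) s : good s -> good (filter P s).
Proof.
elim/last_ind: s => [//|s e IH] /good_rcons [g c].
rewrite filter_rcons; case: (P e); last exact: IH.
apply/good_rcons; split; first exact: IH.
by apply: cond_sub c => x; rewrite mem_filter => /andP [].
Qed.


Lemma pick_side s e (W : {set T}) : cond s e -> e \subset W ->
  exists (X : {set T}) (x y : T),
    [/\ e = [set x; y], x \in X :&: W, y \in W, y \notin X &
     (2 * #|X :&: W| <= #|W|) /\ (forall a, a \in X -> #|nbo s X a| <= f)].
Proof.
move=> [A [B [u [v [E uA vB dAB [hA hB]]]]]] sW.
have uW : u \in W by apply: (subsetP sW); rewrite E !inE eqxx.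
have vW : v \in W by apply: (subsetP sW); rewrite E !inE eqxx orbT.
have hs : #|A :&: W| + #|B :&: W| <= #|W|.
  rewrite -cardsUI.
  have -> : (A :&: W) :&: (B :&: W) = set0.
    apply/setP => x; rewrite !inE; case xA: (x \in A) => //=.
    by rewrite (negbTE (dAB _ xA)) andbF.
  rewrite cards0 addn0; apply: subset_leq_card.
  by rewrite subUset !subsetIr.
case: (leqP #|A :&: W| #|B :&: W|) => hAB.
  exists A, u, v; split => //; first by rewrite inE uA.
    by apply/negP => /dAB; rewrite vB.
  split => //; lia.
exists B, v, u; split => //; first by rewrite E setUC.
  by rewrite inE vB.
  by apply/negP => uB; have := dAB _ uA; rewrite uB.
split => //; lia.
Qed.

Lemma card_bigcup_le (U I : finType) (S : {pred I}) (F : I -> {set U}) :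
  #|\bigcup_(i in S) F i| <= \sum_(i in S) #|F i|.
Proof.
elim/big_rec2: _ => [|i n X _ h]; first by rewrite cards0. apply: leq_trans (leq_card_setU _ _).1 _.
by rewrite leq_add2l.
Qed.

Lemma two_set (e : {set T}) x y : #|e| == 2 -> x \in e -> y \in e -> x != y ->
  e = [set x; y].
Proof.
move=> /eqP c xe ye xy; apply/eqP; rewrite eq_sym eqEcard; apply/andP; split.
  by apply/subsetP => z; rewrite !inE => /orP [] /eqP ->.
by rewrite c cards2 xy.
Qed.

Lemma cross_count (s : seq {set T}) (W X : {set T}) :
  uniq s -> all (fun e : {set T} => (e \subset W) && (#|e| == 2)) s ->
  (forall a, a \in X -> #|nbo s X a| <= f) ->
  count (fun e : {set T} => ~~ (e \subset X :&: W) && ~~ (e \subset W :\: (X :&: W))) s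
    <= f * #|X :&: W|.
Proof.
move=> us al hX.
set P := (fun e => _).
rewrite -size_filter.
have uf : uniq (filter P s) by apply: filter_uniq.
rewrite -(card_uniqP uf).
set U := \bigcup_(a in X :&: W) [set [set a; x] | x in nbo s X a].
apply: (@leq_trans #|U|).
  apply: subset_leq_card; apply/subsetP => e; rewrite mem_filter.
  move=> /andP [/andP [nS nD] es].
  have /andP [eW e2] := allP al e es.
  have [y ye yS] : exists2 y, y \in e & y \notin X :&: W.
    move: nS; rewrite -setD_eq0 => /set0Pn [y]; rewrite inE => /andP [yn ye].
    by exists y.
  have [x xe xS] : exists2 x, x \in e & x \in X :&: W.
    move: nD; rewrite -setD_eq0 => /set0Pn [x]; rewrite inE => /andP [xn xe].
    exists x => //; move: xn; rewrite !inE (subsetP eW _ xe) /= !andbT.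
    by rewrite negbK.
  have xy : x != y by apply/eqP => exy; move: xS; rewrite exy (negbTE yS).
  have E := two_set e2 xe ye xy.
  apply/bigcupP; exists x => //; apply/imsetP; exists y => //.
  rewrite inE -E es andbT; move: yS; rewrite inE (subsetP eW _ ye) andbT.
  by [].
rewrite /U. apply: leq_trans (card_bigcup_le _ _) _.
apply: (@leq_trans (\sum_(a in X :&: W) f)).
  apply: leq_sum => a; rewrite inE => /andP [aX _].
  exact: leq_trans (leq_imset_card _ _) (hX _ aX).
by rewrite sum_nat_const mulnC.
Qed.

Lemma count_split (U : Type) (a b : pred U) (s : seq U) :
  size s <= count a s + count b s + count (fun x => ~~ a x && ~~ b x) s.
Proof.
elim: s => //= x s IH; case: (a x); case: (b x) => /=; lia.
Qed.

Lemma base_bound n : 0 < n -> 'C(n, 2) + 1 <= n * n.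
Proof.
move=> n0; rewrite bin2.
have : (n * n.-1)./2 <= n * n.-1 by rewrite leq_half_double; lia.
case: n n0 => // n _ /=; nia.
Qed.

Lemma core n : forall (W : {set T}) (s : seq {set T}) t,
  #|W| = n -> 0 < n -> n <= f * 2 ^ t -> uniq s ->
  all (fun e : {set T} => (e \subset W) && (#|e| == 2)) s -> good s ->
  size s + 1 <= f * n * t.+1 + n.
Proof.
elim/ltn_ind: n => n IH W s t Wn n0 nb.
case/lastP: s => [|s' e] us al g; first by rewrite /=; lia.
case: t nb => [|t] nb.
  have h1 : size (rcons s' e) <= 'C(n, 2).
    rewrite -(card_uniqP us) -Wn -cards_draws; apply: subset_leq_card.
    by apply/subsetP => x xs; rewrite inE; exact: allP al x xs.
  have := base_bound n0; rewrite expn0 muln1 in nb; nia.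
move: g => /good_rcons [g c].
move: al; rewrite all_rcons => /andP [/andP [eW e2] al].
move: us; rewrite rcons_uniq => /andP [_ us].
have [X [x [y [E xS yW yX [h2 hX]]]]] := pick_side c eW.
set S := X :&: W in xS h2 hX *.
set D := W :\: S.
have eWS : W :&: S = S by apply/setIidPr; rewrite subsetIr.
have cSD : #|S| + #|D| = n by rewrite -Wn -(cardsID S W) eWS.
have S0 : 0 < #|S| by apply/card_gt0P; exists x.
have D0 : 0 < #|D| by apply/card_gt0P; exists y; rewrite !inE yW andbT negb_and yX.
have alF : forall Y : {set T},
    all (fun e : {set T} => (e \subset Y) && (#|e| == 2)) (filter (fun e : {set T} => e \subset Y) s').
  move=> Y; apply/allP => z; rewrite mem_filter => /andP [zY zs].
  by rewrite zY; have /andP [_ ->] := allP al z zs.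
have hS := IH #|S| ltac:(lia) S (filter (fun e : {set T} => e \subset S) s') t erefl S0
  ltac:(rewrite expnS in nb; nia) (filter_uniq _ us) (alF S) (good_filter g).
have hD := IH #|D| ltac:(lia) D (filter (fun e : {set T} => e \subset D) s') t.+1 erefl D0
  ltac:(lia) (filter_uniq _ us) (alF D) (good_filter g).
have hX' := cross_count us al hX.
have hs := count_split (fun e : {set T} => e \subset S) (fun e : {set T} => e \subset D) s'.
rewrite !size_filter in hS hD.
rewrite size_rcons.
move: hS hD hX' hs; rewrite -/S -/D.
move: (count _ s') (count _ s') (count _ s') => c1 c2 c3.
rewrite -cSD; nia.
Qed.

End Core.

Section FromF.
Variables (T : finType) (f : nat) (es H : seq {set T}) (F : Fset T).
Hypothesis Hes : {subset H <= es}.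
Hypothesis degF : degF_le es F f.

Lemma adj_sym : symmetric (adjF H F).
Proof.
move=> a b; rewrite /adjF setUC eq_sym.
by case: (a \in F.1); case: (b \in F.1).
Qed.

Definition compA (w : T) : {set T} :=
  [set z | (z \notin F.1) && connect (adjF H F) w z].

Lemma nbo_bound w a : a \in compA w -> #|nbo H (compA w) a| <= f.
Proof.
move=> aA; have := aA; rewrite inE => /andP [aF cwa].
have hdeg : degv es F a <= f.
  by move/forallP: degF => /(_ a); rewrite aF.
apply: leq_trans hdeg; apply: subset_leq_card; apply/subsetP => z.
rewrite !inE => /andP [zA zH].
have za : z != a by apply/eqP => eza; move: zA; rewrite eza aF cwa.
rewrite za /= setUC (Hes zH) /=.
case zF: (z \in F.1) => //=.
apply/negP => zF2; move: zA; rewrite zF /= => /negP; apply.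
apply: connect_trans cwa (connect1 _).
by rewrite /adjF aF zF eq_sym za zH /=; apply/negP.
Qed.

Lemma cond_of_F e : ~~ damages F e -> disconn H F e -> #|e| == 2 -> cond f H e.
Proof.
move=> nd dis /cards2P [u [v [uv E]]].
move: nd; rewrite /damages negb_or => /andP [nx _].
have nF : forall z, z \in e -> z \notin F.1.
  move=> z ze; apply/negP => zF; move/negP: nx; apply.
  by apply/existsP; exists z; rewrite ze zF.
have uF := nF u ltac:(by rewrite E !inE eqxx).
have vF := nF v ltac:(by rewrite E !inE eqxx orbT).
have ncuv : ~~ connect (adjF H F) u v.
  move/forallP: dis => /(_ u); rewrite E !inE eqxx /= => /forallP /(_ v).
  by rewrite !inE eqxx orbT uv.
exists (compA u), (compA v), u, v; split => //.
- by rewrite inE uF connect0.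
- by rewrite inE vF connect0.
- move=> z; rewrite !inE => /andP [_ cuz]; apply/negP => /andP [_ cvz].
  move/negP: ncuv; apply; apply: connect_trans cuz _.
  by rewrite (sym_connect_sym adj_sym).
- by split => a; apply: nbo_bound.
Qed.

End FromF.

Lemma good_of_blocking (T : finType) (es : seq {set T}) f :
  edges_ok es -> has_MFD_blocking_set es f -> good f es.
Proof.
move=> /andP [ue al] [Fs hF] i lti.
have [_ nd dis dg] := hF i lti.
apply: (@cond_of_F _ f es (take i es) (Fs i) _ dg) => //.
  by move=> x; apply: mem_take.
exact: allP al _ (mem_nth set0 lti).
Qed.

Lemma greedy_inv (T : finType) (es : seq {set T}) f : forall s H,
  uniq (H ++ s) -> all (fun e : {set T} => #|e| == 2) (H ++ s) ->
  {subset H <= es} -> {subset s <= es} -> good f H ->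
  let R := foldl (greedy_step es f) H s in
  [/\ uniq R, all (fun e : {set T} => #|e| == 2) R & good f R].
Proof.
elim=> [|e s IH] H u a sH ss g /=; first by rewrite cats0 in u a.
move: (a); rewrite all_cat /= => /and3P [aH e2 as_].
rewrite /greedy_step; case: ifP => [/existsP [F /and4P [_ dg nd dis]] | _]; apply: IH.
- by rewrite cat_rcons.
- by rewrite cat_rcons.
- move=> x; rewrite mem_rcons inE => /orP [/eqP ->|]; last exact: sH.
  by apply: ss; rewrite mem_head.
- by move=> x xs; apply: ss; rewrite inE xs orbT.
- by apply/good_rcons; split => //; apply: (@cond_of_F _ f es H F sH dg).
- apply: subseq_uniq u; apply: cat_subseq (subseq_refl H) (subseq_cons s e).
- by rewrite all_cat aH as_.
- exact: sH.
- by move=> x xs; apply: ss; rewrite inE xs orbT.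
- exact: g.
Qed.

Lemma INR_muln a b : INR (a * b)%N = Rmult (INR a) (INR b).
Proof. by rewrite -mult_INR. Qed.

Lemma INR_exp2 k : INR (2 ^ k)%N = pow (INR 2) k.
Proof.
elim: k => [|k IH] //; rewrite expnS INR_muln IH /=; reflexivity.
Qed.

Lemma nat_part (m n f : nat) : (1 <= f)%N -> (10 * f < n)%N ->
  (forall t, n <= f * 2 ^ t -> m + 1 <= f * n * t.+1 + n)%N ->
  exists k, [/\ (3 <= k)%N, (f * 2 ^ k <= n)%N & (m <= 2 * f * n * k)%N].
Proof.
move=> f1 fn hm.
set q := n %/ f.
have q10 : (10 <= q)%N by rewrite /q leq_divRL //; lia.
have q0 : (0 < q)%N by lia.
exists (trunc_log 2 q).
have [lo hi] := andP (trunc_log_bounds (isT : (1 < 2)%N) q0).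
set k := trunc_log 2 q in lo hi *.
have k3 : (3 <= k)%N by apply: trunc_log_max => //; rewrite expnE /=; lia.
have hfk : (f * 2 ^ k <= n)%N.
  apply: leq_trans (leq_divM n f); rewrite mulnC leq_mul2r lo orbT //.
have hn : (n <= f * 2 ^ k.+1)%N.
  have := ltn_ceil n f1; rewrite -/q => h.
  apply: leq_trans (ltnW h) _; rewrite mulnC leq_mul2l hi orbT //.
have := hm _ hn; split => //; nia.
Qed.

Lemma real_part (m n f k : nat) : (1 <= f)%N -> (f * 2 ^ k <= n)%N ->
  (m <= 2 * f * n * k)%N ->
  Rle (INR m) (Rmult (Rmult (Rmult 2 (INR f)) (INR n)) (log2 (Rdiv (INR n) (INR f)))).
Proof.
move=> f1 hfk hm.
have f0 : Rlt 0 (INR f) by apply: lt_0_INR; apply/ltP.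
have h2 : Rlt 0 (INR 2) by apply: lt_0_INR; apply/ltP.
have ln2 : Rlt 0 (ln 2) by rewrite -ln_1; apply: ln_increasing; lra.
have hpow : Rle (pow (INR 2) k) (Rdiv (INR n) (INR f)).
  have := le_INR _ _ (elimT leP hfk); rewrite INR_muln INR_exp2 => h.
  apply: (Rmult_le_reg_l (INR f)) => //.
  rewrite /Rdiv -Rmult_assoc (Rmult_comm (INR f) (INR n)) Rmult_assoc Rinv_r; lra.
have pk : Rlt 0 (pow (INR 2) k) by apply: pow_lt.
have hk : Rle (INR k) (log2 (Rdiv (INR n) (INR f))).
  rewrite /log2.
  have e1 : ln (pow (INR 2) k) = Rmult (INR k) (ln 2) by rewrite ln_pow //.
  have hl : Rle (ln (pow (INR 2) k)) (ln (Rdiv (INR n) (INR f))).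
    case: (Rle_lt_or_eq_dec _ _ hpow) => [lt|->]; last lra.
    by apply: Rlt_le; apply: ln_increasing.
  rewrite e1 in hl.
  apply: (Rmult_le_reg_r (ln 2)) => //.
  rewrite /Rdiv Rmult_assoc Rinv_l; lra.
apply: Rle_trans (le_INR _ _ (elimT leP hm)) _.
rewrite !INR_muln.
apply: Rmult_le_compat_l => //.
have := pos_INR f; have := pos_INR n; move=> a b.
apply: Rmult_le_pos; last exact: a.
apply: Rmult_le_pos => //; simpl; lra.
Qed.

Theorem mainTheorem4 :
  exists C : R,
    (forall (T : finType) (es : seq {set T}) (f : nat),
        edges_ok es -> (1 <= f)%N -> (10 * f < #|T|)%N ->
        has_MFD_blocking_set es f ->
        Rle (INR (size es)) (Rmult (Rmult (Rmult C (INR f)) (INR #|T|)) (log2 (Rdiv (INR #|T|) (INR f)))))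
    /\
    (forall (T : finType) (es : seq {set T}) (f : nat),
        edges_ok es -> (1 <= f)%N -> (10 * f < #|T|)%N ->
        Rle (INR (size (FTGreedyMFDCertificate es f)))
            (Rmult (Rmult (Rmult C (INR f)) (INR #|T|)) (log2 (Rdiv (INR #|T|) (INR f))))).
Proof.
exists (IZR 2); split.
  move=> T es f eok f1 fn.
  move=> /(good_of_blocking eok) g.
  have [ue al] := andP eok.
  have [k [_ h1 h2]] : exists k, [/\ (3 <= k)%N, (f * 2 ^ k <= #|T|)%N & (size es <= 2 * f * #|T| * k)%N].
    apply: nat_part => // t ht.
    apply: (@core T f #|T| [set: T] es t) => //; first by rewrite cardsT.
      by lia.
    apply/allP => e es'; rewrite subsetT /=; exact: allP al e es'.
  exact: real_part h1 h2.
move=> T es f eok f1 fn.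
have [ue al] := andP eok.
have [u a g] := @greedy_inv T es f es [::] ue al (fun x (h : x \in [::]) => False_ind _ (notF h)) (fun x h => h) (@good_nil _ f).
have [k [_ h1 h2]] : exists k, [/\ (3 <= k)%N, (f * 2 ^ k <= #|T|)%N & (size (FTGreedyMFDCertificate es f) <= 2 * f * #|T| * k)%N].
  apply: nat_part => // t ht.
  apply: (@core T f #|T| [set: T] _ t) => //; first by rewrite cardsT.
    by lia.
  apply/allP => e es'; rewrite subsetT /=; exact: allP a e es'.
exact: real_part h1 h2.
Qed.
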